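(* Let $\mathcal{H}=(V,E)$ be a linear hypergraph such that $\mathrm{ar}(\mathcal{H})\ge |V|^{1/2}$. Then $$\mathrm{q}(\mathcal{H})\le \Delta([\mathcal{H}]_2)+1.$$
   Context: A hypergraph $\mathcal{H}=(V,E)$ has a finite vertex set $V$ and a finite set $E$ of nonempty subsets of $V$ (hyperedges). It is linear if $|e\cap e'|\le 1$ for all distinct $e,e'\in E$. The antirank $\mathrm{ar}(\mathcal{H})$ is the minimum cardinality of a hyperedge (set to $\infty$ if $E=\varnothing$). The 2-section $[\mathcal{H}]_2$ is the simple graph on $V$ in which two distinct vertices are adjacent iff some hyperedge contains both; $\Delta([\mathcal{H}]_2)$ is its maximum degree. The chromatic index $\mathrm{q}(\mathcal{H})$ is the least $k$ such that the hyperedges can be colored with $k$ colors so that any two distinct intersecting hyperedges receive different colors. *)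

(* Defs.v *)
From mathcomp Require Import all_boot.
Set Implicit Arguments. Unset Strict Implicit. Unset Printing Implicit Defensive.

Section Hyper.
Variable V : finType.
Implicit Types (E : {set {set V}}).

Definition hyperedges_nonempty E : Prop := forall e, e \in E -> e != set0.

Definition linear_hg E : Prop :=
  forall e e', e \in E -> e' \in E -> e != e' -> #|e :&: e'| <= 1.

Definition adj2 E (u v : V) : bool := (u != v) && [exists e in E, (u \in e) && (v \in e)].
Definition deg2 E (u : V) : nat := #|[set v | adj2 E u v]|.
Definition maxdeg2 E : nat := \max_(u : V) deg2 E u.


Definition colorable E k : bool :=
  [exists c : {ffun {set V} -> 'I_k.+1},
     [forall e in E, c e < k] &&
     [forall e in E, forall e' in E, (e != e') && (e :&: e' != set0) ==> (c e != c e')]].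

Lemma colorable_ex E : exists k, colorable E k.
Proof.
have Hi : forall e, e \in E -> index e (enum E) < #|E|.
  by move=> e He; rewrite cardE index_mem mem_enum.
have Hk : forall e, index e (enum E) <= #|E|.
  by move=> e; rewrite cardE index_size.
exists #|E|; apply/existsP.
exists [ffun e => inord (index e (enum E))]; apply/andP; split.
- apply/forallP=> e; apply/implyP=> He; rewrite ffunE inordK ?Hi //.
  by rewrite ltnS Hk.
- apply/forallP=> e; apply/implyP=> He; apply/forallP=> e'; apply/implyP=> He'.
  apply/implyP=> /andP[ne _]; rewrite !ffunE.
  rewrite -(inj_eq val_inj) /= !inordK ?ltnS ?Hk //.
  apply: contra ne => /eqP Heq; apply/eqP.
  have h1 := nth_index e (s:=enum E); have h2 := nth_index e (s:=enum E).
  by rewrite -(h1 e) ?mem_enum // Heq h2 ?mem_enum.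
Qed.

Definition chromatic_index E : nat := ex_minn (colorable_ex E).

(* antirank >= |V|^(1/2): every hyperedge e has #|e| >= sqrt #|V|, i.e. #|e|^2 >= #|V|
   (vacuous when E is empty, matching ar = oo). *)
Definition antirank_ge_sqrtV E : Prop := forall e, e \in E -> #|V| <= #|e| ^ 2.

End Hyper.

(* Main.v *)
Require Import Defs.
From mathcomp Require Import all_boot zify.
Set Implicit Arguments. Unset Strict Implicit. Unset Printing Implicit Defensive.

Lemma card_bigcup_le (T I : finType) (P : pred I) (A : I -> {set T}) :
  #|\bigcup_(i | P i) A i| <= \sum_(i | P i) #|A i|.
Proof.
elim/big_rec2: _ => [|i n U _ leUn]; first by rewrite cards0.
by rewrite (leq_trans (leq_card_setU (A i) U).1) ?leq_add2l.
Qed.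

Lemma disj_sum_seq (T I : finType) (r : seq I) (P : pred I) (A : I -> {set T}) :
  uniq r ->
  (forall i j, i \in r -> j \in r -> P i -> P j -> i != j -> [disjoint A i & A j]) ->
  \sum_(i <- r | P i) #|A i| = #|\bigcup_(i <- r | P i) A i|.
Proof.
elim: r => [|a r IH] /= ; first by rewrite !big_nil cards0.
case/andP=> ar ur H.
rewrite !big_cons; case: ifP => Pa; last first.
  by apply: IH => // i j ir jr; apply: H; rewrite inE ?ir ?jr orbT.
rewrite IH //; last by move=> i j ir jr; apply: H; rewrite inE ?ir ?jr orbT.
have Hdis : [disjoint A a & \bigcup_(i <- r | P i) A i].
  rewrite big_seq_cond; apply: (big_ind (fun U : {set T} => [disjoint A a & U])) => [|U W hU hW|i /andP[ir Pi]].
  - by rewrite -setI_eq0 setI0.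
  - by rewrite -setI_eq0 setIUr; move: hU hW; rewrite -!setI_eq0 => /eqP-> /eqP->; rewrite setU0.
  - apply: H => //; rewrite ?inE ?eqxx ?ir ?orbT //.
    by apply: contraNneq ar => ->.
by rewrite cardsU (_ : _ :&: _ = set0) ?cards0 ?subn0 //; apply/eqP; rewrite setI_eq0.
Qed.

Lemma disj_sum_le (T I : finType) (P : pred I) (A : I -> {set T}) (B : {set T}) :
  (forall i j, P i -> P j -> i != j -> [disjoint A i & A j]) ->
  (forall i, P i -> A i \subset B) ->
  \sum_(i | P i) #|A i| <= #|B|.
Proof.
move=> Hd Hs.
have -> : \sum_(i | P i) #|A i| = #|\bigcup_(i | P i) A i|.
  apply: (@disj_sum_seq T I (index_enum I)); first exact: index_enum_uniq.
  by move=> i j _ _; apply: Hd.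
apply: subset_leq_card; apply/bigcupsP => i; exact: Hs.
Qed.

Definition Dv (V : finType) (E : {set {set V}}) (v : V) := [set f in E | v \in f].

Lemma lin2 (V : finType) (E : {set {set V}}) f f' u v :
  linear_hg E -> f \in E -> f' \in E -> u \in f -> u \in f' -> v \in f -> v \in f' ->
  u != v -> f = f'.
Proof.
move=> L fE f'E uf uf' vf vf' uv; apply/eqP; apply: contraT => ne.
have := L f f' fE f'E ne.
have : #|[set u; v]| <= #|f :&: f'|.
  by apply: subset_leq_card; apply/subsetP => x; rewrite !inE => /orP[]/eqP->; 
     rewrite ?uf ?uf' ?vf ?vf'.
by rewrite cards2 uv => /leq_trans H /H.
Qed.

Lemma deg2_le (V : finType) (E : {set {set V}}) v : deg2 E v <= #|V|.-1.
Proof.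
rewrite -(cardsC1 v); apply: subset_leq_card; apply/subsetP => u.
by rewrite !inE /adj2 eq_sym => /andP[].
Qed.

Lemma deg2_lt (V : finType) (E : {set {set V}}) v w :
  w != v -> ~~ [exists f in E, (v \in f) && (w \in f)] -> deg2 E v < #|V|.-1.
Proof.
move=> wv nex; rewrite -(cardsC1 v); apply: proper_card; apply/properP; split.
  by apply/subsetP => u; rewrite !inE /adj2 eq_sym => /andP[].
by exists w; rewrite !inE ?wv //= /adj2 negb_and nex orbT.
Qed.

Lemma deg2_maxdeg (V : finType) (E : {set {set V}}) v : deg2 E v <= maxdeg2 E.
Proof. exact: (@leq_bigmax V (deg2 E) v). Qed.

Lemma maxdeg2_mono (V : finType) (E E' : {set {set V}}) :
  E' \subset E -> maxdeg2 E' <= maxdeg2 E.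
Proof.
move=> sub; apply/bigmax_leqP => u _; apply: leq_trans (deg2_maxdeg E u).
apply: subset_leq_card; apply/subsetP => x; rewrite !inE /adj2.
case/andP => -> /existsP[f /andP[fE H]]; apply/existsP; exists f.
by rewrite (subsetP sub _ fE).
Qed.

Lemma sumD (V : finType) (E : {set {set V}}) v :
  linear_hg E -> \sum_(f in Dv E v) #|f :\ v| <= deg2 E v.
Proof.
move=> L; apply: disj_sum_le => [f f'|f].
  rewrite !inE => /andP[fE vf] /andP[f'E vf'] ne.
  rewrite -setI_eq0; apply/eqP/setP => u; rewrite !inE.
  apply/negP => /andP[/andP[uv uf] /andP[_ uf']].
  by move/negP: ne; apply; apply/eqP; apply: (lin2 L fE f'E uf uf' vf vf').
rewrite inE => /andP[fE vf]; apply/subsetP => u; rewrite !inE /adj2 => /andP[uv uf].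
rewrite eq_sym uv /=; apply/existsP; exists f; by rewrite fE vf uf.
Qed.

Lemma sum_lb (I : finType) (A : {set I}) (F : I -> nat) c :
  (forall i, i \in A -> c <= F i) -> #|A| * c <= \sum_(i in A) F i.
Proof. by move=> H; rewrite -sum_nat_const; apply: leq_sum. Qed.

Lemma sum_ub (I : finType) (A : {set I}) (F : I -> nat) c :
  (forall i, i \in A -> F i <= c) -> \sum_(i in A) F i <= #|A| * c.
Proof. by move=> H; rewrite -sum_nat_const; apply: leq_sum. Qed.

Lemma bigD1s (I : finType) (A : {set I}) (F : I -> nat) i :
  i \in A -> \sum_(j in A) F j = F i + \sum_(j in A :\ i) F j.
Proof.
move=> iA; rewrite (bigD1 i) //; congr (_ + _); apply: eq_bigl => j.
by rewrite !inE andbC.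
Qed.

Lemma sum_eq_max (I : finType) (A : {set I}) (F : I -> nat) k :
  (forall i, i \in A -> F i <= k) -> #|A| * k <= \sum_(i in A) F i ->
  forall i, i \in A -> F i = k.
Proof.
move=> le sum i iA; apply/eqP; rewrite eqn_leq le //=; apply: contraLR sum.
rewrite -!ltnNge => lt; rewrite (bigD1s F iA) (cardsD1 i A) iA.
have := sum_ub (fun j jA => le j (subsetP (subD1set A i) j jA)).
lia.
Qed.

Lemma sum_lower (V : finType) (E : {set {set V}}) k v :
  (forall f, f \in E -> k <= #|f|) -> k.-1 * #|Dv E v| <= \sum_(f in Dv E v) #|f :\ v|.
Proof.
move=> H; rewrite mulnC; apply: sum_lb => f; rewrite inE => /andP[fE vf].
have := H f fE; rewrite (cardsD1 v f) vf; lia.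
Qed.
Lemma ar_a k d x n : k.-1 * d.+1 <= x -> x <= n.-1 -> n <= k^2 -> 1 < k -> d <= k.
Proof. nia. Qed.
Lemma ar_b k d x D F S : k.-1 * d.+1 <= x -> x <= D -> D < F -> F <= S -> S <= k * d -> d <= k -> d = k.
Proof. nia. Qed.
Lemma ar_c k x D n F S : 1 < k -> k.-1 * k.+1 <= x -> x <= D -> x <= n.-1 -> n <= k^2 -> D < F -> F <= S -> S <= k * k -> D = k^2-1 /\ n = k^2.
Proof. case: k => [|k] /= h0 h1 h2 h3 h4 h5 h6 h7; first lia. have hD : D = k.+1^2 - 1 by nia. split; first exact hD. nia. Qed.
Lemma ar_d k D F S : D < F -> F <= S -> S <= k*k -> F <= k^2.
Proof. nia. Qed.
Lemma ar_e k D F S : D < F -> F <= S -> D = k^2 - 1 -> k * k <= S.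
Proof. nia. Qed.
Lemma ar_f k x n : k.-1 * k.+1 <= x -> x < n.-1 -> n = k^2 -> False.
Proof. nia. Qed.
Lemma ar_g k s x n : s + k * k.-1 <= x -> x <= n.-1 -> n = k^2 -> s <= k.-1.
Proof. nia. Qed.
Lemma ar_h k n : 1 < k -> k.-1 * k.+2 <= n.-1 -> n = k^2 -> False.
Proof. nia. Qed.
Lemma ar_i k S G : k*1 <= S -> S <= G -> G <= k.-1 -> 1 < k -> False.
Proof. lia. Qed.
Lemma ar_j i f F q D K : i < f -> f.+2 = F -> F <= q -> D = q - 1 -> D < K -> i.+2 < K.
Proof. lia. Qed.

Lemma bad_case (V : finType) (E : {set {set V}}) e K :
  hyperedges_nonempty E -> linear_hg E -> antirank_ge_sqrtV E ->
  e \in E -> (forall f, f \in E -> #|e| <= #|f|) ->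
  maxdeg2 E < #|[set f in E | (f != e) && (f :&: e != set0)]| ->
  maxdeg2 E < K -> colorable E K.
Proof.
move=> NE L AR eE emin.
set F := [set f in E | _].
move=> bad DK.
have hn : #|V| <= #|e| ^ 2 := AR e eE.
have k1 : 0 < #|e| by rewrite card_gt0; exact: NE e eE.
pose D' v := [set f in E | (f != e) && (v \in f)].
have hdeg v : deg2 E v <= maxdeg2 E := deg2_maxdeg E v.
have hdn v : deg2 E v <= #|V|.-1 := deg2_le E v.
have hP v : #|e|.-1 * #|Dv E v| <= deg2 E v := leq_trans (sum_lower v emin) (sumD v L).
have hDD v : v \in e -> #|Dv E v| = (#|D' v|).+1.
  move=> ve; have -> : Dv E v = e |: D' v.
    apply/setP => f; rewrite !inE; case: (eqVneq f e) => [->|ne] /=; rewrite ?eE ?ve //.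
  by rewrite (cardsU1 e (D' v)) /D' inE eqxx andbF add1n.
have hF : #|F| <= \sum_(v in e) #|D' v|.
  apply: leq_trans (card_bigcup_le _ _); apply: subset_leq_card; apply/subsetP => f.
  rewrite inE => /andP[fE /andP[fe /set0Pn[v]]]; rewrite inE => /andP[vf ve].
  by apply/bigcupP; exists v => //; rewrite inE fE fe vf.
have k2 : 1 < #|e|.
  rewrite ltnNge; apply/negP => k1'.
  have kk : #|e| = 1 by apply/eqP; rewrite eqn_leq k1' k1.
  rewrite kk in hn.
  have allT g : g \in E -> g = setT.
    move=> gE; apply/eqP; rewrite eqEcard subsetT cardsT.
    by apply: leq_trans hn _; rewrite exp1n -kk emin.
  have F0 : F = set0.
    apply/setP => f; rewrite !inE; apply/negP => /andP[fE /andP[fe _]].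
    by rewrite (allT f fE) (allT e eE) eqxx in fe.
  by move: bad; rewrite F0 cards0.
have hD'k v : v \in e -> #|D' v| <= #|e|.
  move=> ve; have := hP v; rewrite hDD // => h; exact: (ar_a h (hdn v) hn k2).
have /set0Pn[v0 v0e] : e != set0 := NE e eE.
case: (arg_maxnP (fun v => #|D' v|) v0e) => vs vse vsmax.
have hsum : \sum_(v in e) #|D' v| <= #|e| * #|D' vs| by apply: sum_ub => v ve; exact: vsmax.
have dvs : #|D' vs| = #|e|.
  have := hP vs; rewrite hDD // => h1; exact: (ar_b h1 (hdeg vs) bad hF hsum (hD'k vs vse)).
have hsum' : \sum_(v in e) #|D' v| <= #|e| * #|e| by move: hsum; rewrite dvs.
have hD : maxdeg2 E = #|e| ^ 2 - 1 /\ #|V| = #|e| ^ 2.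
  have := hP vs; rewrite hDD // dvs => h1.
  exact: (ar_c k2 h1 (hdeg vs) (hdn vs) hn bad hF hsum').
case: hD => hD hnV.
have hFk : #|F| <= #|e| ^ 2 := ar_d bad hF hsum'.
have hall : forall v, v \in e -> #|D' v| = #|e|.
  by apply: sum_eq_max => //; exact: (ar_e bad hF hD).
have cover : forall v w, v \in e -> w != v -> [exists f in E, (v \in f) && (w \in f)].
  move=> v w ve wv; apply: contraT => nex; have := deg2_lt wv nex.
  have := hP v; rewrite hDD // hall // => h1 h2; by case: (ar_f h1 h2 hnV).
have hsz : forall v g, v \in e -> g \in E -> v \in g -> #|g :\ v| <= #|e|.-1.
  move=> v g ve gE vg; have := sumD v L.
  have gD : g \in Dv E v by rewrite inE gE vg.
  rewrite (bigD1s _ gD).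
  have := @sum_lb _ (Dv E v :\ g) (fun f => #|f :\ v|) #|e|.-1.
  have cD : #|Dv E v :\ g| = #|e|.
    by have := cardsD1 g (Dv E v); rewrite gD hDD // hall // add1n => -[->].
  rewrite cD => h; have {}h : #|e| * #|e|.-1 <= \sum_(j in Dv E v :\ g) #|j :\ v|.
    apply: h => f; rewrite !inE => /andP[_ /andP[fE vf]].
    have := emin f fE; rewrite (cardsD1 v f) vf => h0; by rewrite -subn1 leq_subLR.
  move=> h2; exact: (ar_g (leq_trans (leq_add (leqnn _) h) h2) (hdn v) hnV).
have /set0Pn[v2 v2e'] : e :\ v0 != set0.
  rewrite -card_gt0; move: (k2); by rewrite (cardsD1 v0 e) v0e add1n ltnS.
move: v2e'; rewrite !inE => /andP[v20 v2e].
have v02 : v0 != v2 by rewrite eq_sym.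
have /set0Pn[g0 g0D] : D' v2 != set0 by rewrite -card_gt0 hall.
move: (g0D); rewrite inE => /andP[g0E /andP[g0e v2g0]].
have v0g0 : v0 \notin g0.
  apply/negP => v0g; move/negP: g0e; apply; apply/eqP.
  exact: (lin2 L g0E eE v0g v0e v2g0 v2e v02).
have [f0 f0D f0g0] : exists2 f0, f0 \in D' v0 & f0 :&: g0 = set0.
  have : [exists f in D' v0, f :&: g0 == set0].
    apply: contraT; rewrite negb_exists_in => /forall_inP H.
    have h1 : \sum_(f in D' v0) #|f :&: g0| <= #|g0 :\ v2|.
      apply: disj_sum_le => [f f'|f].
      - rewrite !inE => /andP[fE /andP[fe v0f]] /andP[f'E /andP[f'e v0f']] ne.
        rewrite -setI_eq0; apply/eqP/setP => u; rewrite !inE.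
        apply/negP => /andP[/andP[uf ug] /andP[uf' _]].
        have uv0 : u != v0 by apply: contraNneq v0g0 => <-.
        by move/negP: ne; apply; apply/eqP; apply: (lin2 L fE f'E uf uf' v0f v0f' uv0).
      - rewrite inE => /andP[fE /andP[fe v0f]]; apply/subsetP => u.
        rewrite !inE => /andP[uf ug]; rewrite ug andbT.
        apply: contraNneq fe => uv2; subst u; apply/eqP.
        exact: (lin2 L fE eE v0f v0e uf v2e v02).
    have h2 : #|D' v0| * 1 <= \sum_(f in D' v0) #|f :&: g0|.
      by apply: sum_lb => f fD; rewrite card_gt0; exact: H.
    move: h2; rewrite hall // => h2; by case: (ar_i h2 h1 (hsz v2 g0 v2e g0E v2g0) k2).
  by case/exists_inP => f fD /eqP; exists f.
move: (f0D); rewrite inE => /andP[f0E /andP[f0e v0f0]].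
have hG : forall g g', g \in E -> g' \in E -> g \notin F -> g' \notin F ->
    g != e -> g' != e -> g != g' -> g :&: g' = set0.
  move=> g g' gE g'E gF g'F ge g'e gg'.
  have ge0 : g :&: e = set0 by move: gF; rewrite inE gE ge /= negbK => /eqP.
  have g'e0 : g' :&: e = set0 by move: g'F; rewrite inE g'E g'e /= negbK => /eqP.
  apply/eqP; apply: contraT => /set0Pn[w]; rewrite inE => /andP[wg wg'].
  have we : w \notin e.
    by apply/negP => we; move/setP: ge0 => /(_ w); rewrite !inE wg we.
  pose Fw := [set f in Dv E w | f :&: e != set0].
  have hFw : #|e| <= #|Fw|.
    have : e \subset \bigcup_(f in Fw) (f :&: e).
      apply/subsetP => v ve; have wv : w != v by apply: contraNneq we => ->.
      case/exists_inP: (cover v w ve wv) => f fE /andP[vf wf].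
      apply/bigcupP; exists f; last by rewrite inE vf ve.
      rewrite !inE fE wf /=; apply/set0Pn; exists v; by rewrite inE vf ve.
    move/subset_leq_card => h; apply: (leq_trans h); apply: (leq_trans (card_bigcup_le _ _)).
    rewrite -[#|Fw|]muln1; apply: sum_ub => f; rewrite !inE => /andP[/andP[fE wf] _].
    apply: L => //; apply: contraNneq we => <-; exact: wf.
  have hDw : #|Fw|.+2 <= #|Dv E w|.
    have sub : g |: (g' |: Fw) \subset Dv E w.
      apply/subsetP => f; rewrite !inE => /orP[/eqP->|/orP[/eqP->|/andP[]]].
      - by rewrite gE wg.
      - by rewrite g'E wg'.
      - done.
    have := subset_leq_card sub.
    rewrite (cardsU1 g) (cardsU1 g') !inE ge0 g'e0 eqxx (negbTE gg') !andbF /=; rewrite !add1n => -> //.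
  have h1 : #|e|.-1 * (#|e|.+2) <= #|e|.-1 * #|Dv E w|.
    by rewrite leq_mul2l; apply/orP; right; apply: leq_trans hDw; rewrite !ltnS.
  by case: (ar_h k2 (leq_trans h1 (leq_trans (hP w) (hdn w))) hnV).
have f0F : f0 \in F.
  rewrite inE f0E f0e /=; apply/set0Pn; exists v0; by rewrite inE v0f0 v0e.
have g0F : g0 \in F.
  rewrite inE g0E g0e /=; apply/set0Pn; exists v2; by rewrite inE v2g0 v2e.
have f0g0' : f0 != g0.
  apply/eqP => eq; move: f0g0; rewrite eq setIid => /setP/(_ v2); by rewrite !inE v2g0.
pose F' := F :\ f0 :\ g0.
have cF' : #|F'|.+2 = #|F|.
  have := cardsD1 g0 (F :\ f0); have := cardsD1 f0 F.
  rewrite f0F in_setD1 g0F eq_sym f0g0' /= !add1n => -> ->; done.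
pose col x := if x \in F then (if (x == f0) || (x == g0) then 1 else (index x (enum F')).+2) else 0.
have K2 : 1 < K.
  apply: leq_ltn_trans DK; rewrite hD; move: k2.
  by case: #|e| => [|[|k]] //= _; rewrite !expnS !mulSn.
have colK x : col x < K.
  rewrite /col; case: ifP => xF; last by apply: ltn_trans K2.
  case: ifP => // hx.
  have xF' : x \in F' by rewrite !in_setD1 xF andbT; case/norP: (negbT hx) => -> ->.
  have := index_mem x (enum F'); rewrite mem_enum xF' -cardE => h.
  exact: (ar_j h cF' hFk hD DK).
have ne0 : forall y, y \in E -> y \notin F -> y != e -> y :&: e = set0.
  by move=> y yE; rewrite inE yE => /= yF ye; move: yF; rewrite ye /= negbK => /eqP.
have colinj : forall x y, x \in E -> y \in E -> x != y -> col x = col y -> x :&: y = set0.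
  move=> x y xE yE xy; rewrite /col.
  case xF: (x \in F); case yF: (y \in F).
  - case: ifP => hx; case: ifP => hy //.
    + move=> _; case/orP: hx => /eqP hx; case/orP: hy => /eqP hy; subst x y;
        first [by rewrite eqxx in xy | done | by rewrite setIC].
    + have xF' : x \in F' by rewrite !in_setD1 xF andbT; case/norP: (negbT hx) => -> ->.
      have yF' : y \in F' by rewrite !in_setD1 yF andbT; case/norP: (negbT hy) => -> ->.
      move=> [] Heq.
      have := nth_index x (_ : x \in enum F'); rewrite ?mem_enum // Heq nth_index ?mem_enum //.
      by move=> yx; rewrite (yx xF') eqxx in xy.
  - by case: ifP.
  - by case: ifP.
  - move=> _; case: (eqVneq x e) => [xe|xe].
      subst x; rewrite setIC; apply: ne0 => //; by rewrite ?yF // eq_sym.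
    case: (eqVneq y e) => [ye|ye].
      subst y; apply: ne0 => //; by rewrite ?xF.
    by apply: hG => //; rewrite ?xF ?yF.
apply/existsP; exists [ffun x => (inord (col x) : 'I_K.+1)]; apply/andP; split.
  apply/forall_inP => x _; rewrite ffunE inordK //; exact: ltn_trans (colK x) _.
apply/forall_inP => x xE; apply/forall_inP => y yE; apply/implyP => /andP[xy nxy].
rewrite !ffunE; apply: contraNneq nxy => /(congr1 val); rewrite /= !inordK;
  try by apply: ltn_trans (colK _) _.
by move=> h; apply/eqP; apply: colinj.
Qed.

Lemma colorable0 (V : finType) K : colorable (set0 : {set {set V}}) K.
Proof.
apply/existsP; exists [ffun _ => (ord0 : 'I_K.+1)]; apply/andP; split.
  by apply/forall_inP => x; rewrite inE.
by apply/forall_inP => x; rewrite inE.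
Qed.

Lemma extend (V : finType) (E : {set {set V}}) e K :
  e \in E -> colorable (E :\ e) K ->
  #|[set f in E | (f != e) && (f :&: e != set0)]| < K -> colorable E K.
Proof.
move=> eE /existsP[c /andP[/forall_inP cK /forall_inP cP]].
set F := [set f in E | _] => FK.
pose S := [set c f | f in F].
have : ~~ ([set: 'I_K.+1] \subset ord_max |: S).
  apply/negP => /subset_leq_card; rewrite cardsT card_ord.
  apply/negP; rewrite -ltnNge; apply: (leq_ltn_trans (leq_card_setU _ _).1).
  rewrite cards1 add1n ltnS; exact: leq_ltn_trans (leq_imset_card _ _) FK.
case/subsetPn => i _; rewrite !inE negb_or => /andP[imax iS].
have iK : i < K.
  have := ltn_ord i; rewrite ltnS leq_eqVlt => /orP[/eqP hi|//].
  by move/negP: imax; case; apply/eqP/val_inj.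
apply/existsP; exists [ffun x => if x == e then i else c x]; apply/andP; split.
  apply/forall_inP => x xE; rewrite ffunE; case: eqP => // /eqP ne.
  by apply: cK; rewrite in_setD1 ne.
apply/forall_inP => x xE; apply/forall_inP => y yE; apply/implyP => /andP[xy nxy].
rewrite !ffunE.
case: (eqVneq x e) => [xe|xe]; case: (eqVneq y e) => [ye|ye].
- by rewrite xe ye eqxx in xy.
- have yF : y \in F by rewrite inE yE ye /= setIC -xe.
  by apply: contraNneq iS => ->; apply: imset_f.
- have xF : x \in F by rewrite inE xE xe /= -ye.
  by apply: contraNneq iS => <-; apply: imset_f.
- have := cP x; rewrite in_setD1 xe xE => /(_ isT)/forall_inP/(_ y).
  by rewrite in_setD1 ye yE xy nxy => /(_ isT).
Qed.

Lemma mainN (V : finType) N : forall (E : {set {set V}}), #|E| <= N ->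
  hyperedges_nonempty E -> linear_hg E -> antirank_ge_sqrtV E ->
  forall K, maxdeg2 E < K -> colorable E K.
Proof.
elim: N => [|N IH] E hE NE L AR K DK.
  by move: hE; rewrite leqn0 cards_eq0 => /eqP->; exact: colorable0.
case: (set_0Vmem E) => [->|[e0 e0E]]; first exact: colorable0.
case: (arg_minnP (fun f : {set V} => #|f|) e0E) => e eE0 emin.
have eE : e \in E := eE0.
case: (leqP #|[set f in E | (f != e) && (f :&: e != set0)]| (maxdeg2 E)) => hF.
  apply: (extend eE _ (leq_ltn_trans hF DK)).
  have sub : E :\ e \subset E := subD1set E e.
  apply: IH.
  - by move: hE; rewrite (cardsD1 e E) eE.
  - by move=> f /(subsetP sub); exact: NE.
  - by move=> f f' /(subsetP sub) fE /(subsetP sub) f'E; exact: L.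
  - by move=> f /(subsetP sub); exact: AR.
  - exact: leq_ltn_trans (maxdeg2_mono sub) DK.
apply: (bad_case NE L AR eE _ hF DK) => f fE; exact: emin.
Qed.

Unset Implicit Arguments. Set Strict Implicit.

Theorem theorem1p6 (V : finType) (E : {set {set V}}) :
  hyperedges_nonempty E -> linear_hg E -> antirank_ge_sqrtV E ->
  chromatic_index E <= maxdeg2 E + 1.
Proof.
move=> NE L AR; rewrite /chromatic_index; case: ex_minnP => m _ H; apply: H.
by apply: (mainN (leqnn #|E|)) => //; rewrite addn1.
Qed.
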